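(* Let $\rho$ be an $n$-qubit state and $\mathcal S$ a collection of subsets of $[n]$ such that the hypergraph $([n],\mathcal S)$ is connected and $\rho_S$ is a symmetric state on $\mathcal H_S$ for every $S\in\mathcal S$. Then $\rho$ is a symmetric state.
   Context: Let $[n]=\{1,\dots,n\}$, $\mathcal H_{[n]}=(\mathbb C^2)^{\otimes n}$, $\mathcal H_S$ the tensor product of the qubits in $S$, and $\rho_S$ the partial trace of $\rho$ over qubits outside $S$. The symmetric subspace of $\mathcal H_S$ consists of vectors invariant under swapping any two qubits of $S$; a state on $\mathcal H_S$ is symmetric if its range is contained in the symmetric subspace (every single-qubit state is symmetric). The hypergraph $([n],\mathcal S)$ is connected if for every partition of $[n]$ into nonempty sets $X,Y$ some $S\in\mathcal S$ intersects both $X$ and $Y$. *)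

(* Defs.v *)
(* Complex scalars: an arbitrary numClosedFieldType C
   (covers the complex numbers). *)
From HB Require Import structures.
From mathcomp Require Import all_boot all_order all_algebra all_fingroup.
Set Implicit Arguments. Unset Strict Implicit. Unset Printing Implicit Defensive.
Import Order.TTheory GRing.Theory Num.Theory.
Local Open Scope ring_scope.

Section Qubits.
Variable C : numClosedFieldType.

Definition basis (Q : finType) := {ffun Q -> bool}.

(* Vectors and operators on H_Q = (C^2)^{⊗ Q}, in the computational basis. *)
Definition vect (Q : finType) := basis Q -> C.
Definition oper (Q : finType) := basis Q -> basis Q -> C.

Definition apply_op (Q : finType) (A : oper Q) (w : vect Q) : vect Q :=
  fun a => \sum_(b : basis Q) A a b * w b.

Definition hermitian (Q : finType) (A : oper Q) : Prop :=
  forall a b : basis Q, A a b = (A b a)^*.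

Definition psd (Q : finType) (A : oper Q) : Prop :=
  hermitian A /\
  forall v : vect Q, 0 <= \sum_(a : basis Q) \sum_(b : basis Q) (v a)^* * A a b * v b.

Definition is_state (Q : finType) (A : oper Q) : Prop :=
  psd A /\ \sum_(a : basis Q) A a a = 1.

Definition swap_basis (Q : finType) (i j : Q) (a : basis Q) : basis Q :=
  [ffun k => a (tperm i j k)].

Definition sym_vect (Q : finType) (v : vect Q) : Prop :=
  forall (i j : Q) (a : basis Q), v (swap_basis i j a) = v a.

Definition symmetric_state (Q : finType) (A : oper Q) : Prop :=
  is_state A /\ forall w : vect Q, sym_vect (apply_op A w).

Definition sub_qubits (n : nat) (S : {set 'I_n}) : finType := {i : 'I_n | i \in S}.

Definition restr (n : nat) (S : {set 'I_n}) (x : basis 'I_n) : basis (sub_qubits S) :=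
  [ffun i : sub_qubits S => x (val i)].

Definition ptrace (n : nat) (S : {set 'I_n}) (rho : oper 'I_n) : oper (sub_qubits S) :=
  fun a b => \sum_(x : basis 'I_n) \sum_(y : basis 'I_n |
     [&& restr S x == a, restr S y == b & [forall k, (k \notin S) ==> (x k == y k)]])
     rho x y.

End Qubits.

Definition hconnected (n : nat) (SS : {set {set 'I_n}}) : Prop :=
  forall X Y : {set 'I_n}, X != set0 -> Y != set0 -> X :&: Y = set0 -> X :|: Y = setT ->
    exists2 S, S \in SS & (S :&: X != set0) && (S :&: Y != set0).

(* Main.v *)
Require Import Defs.
From mathcomp Require Import all_boot all_order all_algebra all_fingroup.
From mathcomp Require Import ring.
Set Implicit Arguments. Unset Strict Implicit. Unset Printing Implicit Defensive.
Import Order.TTheory GRing.Theory Num.Theory.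
Local Open Scope ring_scope.

Definition bform (C : numClosedFieldType) (Q : finType) (A : oper C Q) (u w : vect C Q) : C :=
  \sum_(a : basis Q) (u a)^* * \sum_(b : basis Q) A a b * w b.

Definition delta (C : numClosedFieldType) (Q : finType) (p : basis Q) : vect C Q :=
  fun b => (b == p)%:R.

Lemma qformE (C : numClosedFieldType) (Q : finType) (A : oper C Q) (v : vect C Q) :
  \sum_(a : basis Q) \sum_(b : basis Q) (v a)^* * A a b * v b = bform A v v.
Proof.
rewrite /bform; apply: eq_bigr => a _; rewrite mulr_sumr; apply: eq_bigr => b _.
by rewrite mulrA.
Qed.

Lemma sum_delta (C : numClosedFieldType) (Q : finType) (F : basis Q -> C) p :
  \sum_b F b * (b == p)%:R = F p.
Proof.
rewrite (bigD1 p) //= eqxx mulr1 big1 ?addr0 // => b /negbTE ->; by rewrite mulr0.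
Qed.

Lemma sum_deltal (C : numClosedFieldType) (Q : finType) (F : basis Q -> C) p :
  \sum_b ((b == p)%:R)^* * F b = F p.
Proof.
rewrite -[RHS](sum_delta F p); apply: eq_bigr => b _; by rewrite rmorph_nat mulrC.
Qed.

Lemma bformDr (C : numClosedFieldType) (Q : finType) (A : oper C Q) u w1 w2 k :
  bform A u (fun b => w1 b + k * w2 b) = bform A u w1 + k * bform A u w2.
Proof.
rewrite /bform mulr_sumr -big_split; apply: eq_bigr => a _ /=.
rewrite mulrCA -mulrDr; congr (_ * _).
rewrite mulr_sumr -big_split; apply: eq_bigr => b _ /=; ring.
Qed.

Lemma bformDl (C : numClosedFieldType) (Q : finType) (A : oper C Q) u1 u2 w k :
  bform A (fun b => u1 b + k * u2 b) w = bform A u1 w + k^* * bform A u2 w.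
Proof.
rewrite /bform mulr_sumr -big_split; apply: eq_bigr => a _ /=.
rewrite rmorphD rmorphM /=; ring.
Qed.

Lemma bform_dd (C : numClosedFieldType) (Q : finType) (A : oper C Q) p q :
  bform A (delta C p) (delta C q) = A p q.
Proof.
by rewrite /bform /delta (sum_deltal (fun a => \sum_b A a b * (b == q)%:R)) sum_delta.
Qed.

Lemma psd_kernel (C : numClosedFieldType) (Q : finType) (A : oper C Q) :
  psd A -> forall v, bform A v v = 0 -> forall a0, \sum_b A a0 b * v b = 0.
Proof.
move=> [hA pA] v qv a0.
set c := \sum_b A a0 b * v b.
have A00 : 0 <= A a0 a0 by rewrite -(bform_dd A a0 a0) -qformE; apply: pA.
set m := A a0 a0 + 1.
have mc : m^* = m by apply: geC0_conj; rewrite /m addr_ge0.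
pose u := fun b => m * v b + (- c) * delta C a0 b.
have Bve : bform A v (delta C a0) = c^*.
  rewrite /bform /c rmorph_sum; apply: eq_bigr => a _ /=.
  by rewrite /delta sum_delta rmorphM /= hA mulrC.
have Bev : bform A (delta C a0) v = c.
  by rewrite /bform /delta sum_deltal.
have Bmv : forall w, bform A (fun b => m * v b) w = m^* * bform A v w.
  move=> w; rewrite /bform mulr_sumr; apply: eq_bigr => a _; rewrite rmorphM /=; ring.
have Bmv2 : forall w, bform A w (fun b => m * v b) = m * bform A w v.
  move=> w; rewrite /bform mulr_sumr; apply: eq_bigr => a _.
  rewrite mulr_sumr mulr_sumr mulr_sumr; apply: eq_bigr => b _; ring.
have qu : bform A u u = - (c * c^*) * (A a0 a0 + 2).
  rewrite /u bformDl !bformDr !Bmv !Bmv2 qv Bve Bev bform_dd mc.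
  rewrite rmorphN /= /m; ring.
have := pA u; rewrite qformE qu mulNr oppr_ge0 pmulr_lle0; last first.
  by apply: lt_le_trans (ler_wpDl A00 (lexx 2)); rewrite ltr0n.
rewrite -normCK => H.
have : `|c| ^+ 2 = 0 by apply/eqP; rewrite eq_le H exprn_ge0.
by move/eqP; rewrite expf_eq0 /= normr_eq0 => /eqP.
Qed.

Lemma val_tperm (n : nat) (S : {set 'I_n}) (i j : 'I_n) (Hi : i \in S) (Hj : j \in S)
  (k : sub_qubits S) :
  val (tperm (exist (fun x => x \in S) i Hi : sub_qubits S) (exist _ j Hj) k)
  = tperm i j (val k).
Proof.
case: tpermP => [->|->|/eqP Hki /eqP Hkj] /=; first by rewrite tpermL.
  by rewrite tpermR.
rewrite tpermD //.
  by apply: contra Hki => /eqP Hik; apply/eqP/val_inj; rewrite /= Hik.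
by apply: contra Hkj => /eqP Hik; apply/eqP/val_inj; rewrite /= Hik.
Qed.

Lemma cond_swap (n : nat) (S : {set 'I_n}) (i j : 'I_n) (Hi : i \in S) (Hj : j \in S)
  (x y : basis 'I_n) :
  (restr S x == swap_basis (exist (fun x => x \in S) i Hi : sub_qubits S) (exist _ j Hj)
     (restr S y)) && [forall k, (k \notin S) ==> (x k == y k)]
  = (x == swap_basis i j y).
Proof.
have outS : forall k, k \notin S -> tperm i j k = k.
  move=> k kS; apply: tpermD; apply: contra kS => /eqP <- //.
apply/idP/eqP.
  case/andP => /eqP Hr /forallP Ha; apply/ffunP => k; rewrite ffunE.
  case: (boolP (k \in S)) => Hk.
    move/ffunP: Hr => Hr; have := Hr (exist (fun x => x \in S) k Hk).
    rewrite !ffunE /= => ->; by move: (val_tperm Hi Hj (exist _ k Hk)) => /= ->.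
  by move: (Ha k); rewrite Hk /= => /eqP ->; rewrite outS.
move=> ->; apply/andP; split.
  by apply/eqP/ffunP => k; rewrite !ffunE val_tperm.
by apply/forallP => k; apply/implyP => Hk; rewrite ffunE outS.
Qed.

Lemma trace_swap (C : numClosedFieldType) (n : nat) (S : {set 'I_n}) (rho : oper C 'I_n)
  (i j : 'I_n) (Hi : i \in S) (Hj : j \in S) :
  \sum_a @ptrace C n S rho (swap_basis (exist (fun x => x \in S) i Hi : sub_qubits S)
                         (exist _ j Hj) a) a
  = \sum_y rho (swap_basis i j y) y.
Proof.
rewrite /ptrace.
under eq_bigr => a _ do under eq_bigr => x _ do rewrite big_mkcond /=.
rewrite exchange_big /=.
under eq_bigr => x _ do rewrite exchange_big /=.
rewrite exchange_big /=; apply: eq_bigr => y _.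
rewrite (eq_bigr (fun x => if x == swap_basis i j y then rho x y else 0)).
  by rewrite -big_mkcond big_pred1_eq.
move=> x _; rewrite (bigD1 (restr S y)) //= eqxx /=.
rewrite big1 ?addr0; last by move=> a; rewrite eq_sym => /negbTE ->; rewrite andbF.
by rewrite -(cond_swap Hi Hj).
Qed.

Lemma col_inv (C : numClosedFieldType) (Q : finType) (A : oper C Q)
  (s : basis Q -> basis Q) (Hs : involutive s) :
  psd A -> \sum_y A y y - \sum_y A (s y) y = 0 -> forall a x, A a (s x) = A a x.
Proof.
move=> pA H0 a x.
pose v x := fun b => delta C x b + (-1) * delta C (s x) b.
have qv : forall x, bform A (v x) (v x) =
   (A x x - A (s x) x) + (A (s x) (s x) - A (s (s x)) (s x)).
  move=> y; rewrite /v bformDl !bformDr !bform_dd Hs rmorphN rmorph1; ring.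
have sum0 : \sum_x bform A (v x) (v x) = 0.
  rewrite (eq_bigr _ (fun y _ => qv y)) big_split /=.
  have -> : \sum_y (A (s y) (s y) - A (s (s y)) (s y)) = \sum_y (A y y - A (s y) y).
    by rewrite [RHS](reindex_inj (inv_inj Hs)).
  by rewrite sumrB H0 addr0.
have q0 : bform A (v x) (v x) = 0.
  apply: (psumr_eq0P _ sum0) => // y _; rewrite -qformE; exact: pA.2.
have := psd_kernel pA q0 a.
rewrite /v (eq_bigr (fun b => A a b * delta C x b + (-1) * (A a b * delta C (s x) b))); last first.
  by move=> b _; ring.
rewrite big_split /= -mulr_sumr /delta !sum_delta => /eqP.
by rewrite mulN1r subr_eq0 => /eqP.
Qed.

Definition pinvb (C : numClosedFieldType) (n : nat) (rho : oper C 'I_n) (s : {perm 'I_n}) :=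
  [forall x : basis 'I_n, forall y : basis 'I_n, rho [ffun l => x (s l)] y == rho x y].

Lemma pinvP (C : numClosedFieldType) (n : nat) (rho : oper C 'I_n) (s : {perm 'I_n}) :
  reflect (forall x y : basis 'I_n, rho [ffun l => x (s l)] y = rho x y) (pinvb rho s).
Proof.
apply: (iffP forallP) => [H x y | H x]; first by move/forallP: (H x) => /(_ y) /eqP.
by apply/forallP => y; rewrite H.
Qed.

Lemma pinv_mul (C : numClosedFieldType) (n : nat) (rho : oper C 'I_n) (s t : {perm 'I_n}) :
  pinvb rho s -> pinvb rho t -> pinvb rho (s * t)%g.
Proof.
move=> /pinvP Hs /pinvP Ht; apply/pinvP => x y.
have -> : [ffun l => x ((s * t)%g l)] = [ffun l => [ffun l' => x (t l')] (s l)].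
  by apply/ffunP => l; rewrite !ffunE permM.
by rewrite Hs Ht.
Qed.

Lemma pinv1 (C : numClosedFieldType) (n : nat) (rho : oper C 'I_n) : pinvb rho 1%g.
Proof.
apply/pinvP => x y; congr (rho _ y); by apply/ffunP => l; rewrite ffunE perm1.
Qed.

Lemma all_tperm (C : numClosedFieldType) (n : nat) (rho : oper C 'I_n)
  (SS : {set {set 'I_n}}) :
  (forall S i j, S \in SS -> i \in S -> j \in S -> pinvb rho (tperm i j)) ->
  hconnected SS -> forall i k, pinvb rho (tperm i k).
Proof.
move=> HS hc i k.
pose X := [set k | pinvb rho (tperm i k)].
have iX : i \in X by rewrite inE tperm1 pinv1.
case: (boolP (k \in X)) => [|kX]; first by rewrite inE.
have e1 : X != set0 by apply/set0Pn; exists i.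
have e2 : ~: X != set0 by apply/set0Pn; exists k; rewrite inE.
have [S SS' /andP [h1 h2]] := hc X (~: X) e1 e2 (setICr X) (setUCr X).
case/set0Pn: h1 => k1; rewrite inE => /andP [k1S k1X].
case/set0Pn: h2 => k2; rewrite !inE => /andP [k2S k2X].
have Hk12 := HS _ _ _ SS' k1S k2S.
move: k1X k2X; rewrite !inE => k1X k2X.
have ik2 : i != k2 by apply: contraNneq k2X => <-; rewrite tperm1 pinv1.
have k12 : k1 != k2 by apply: contraNneq k2X => <-.
have : pinvb rho (tperm i k2).
  have -> : tperm i k2 = ((tperm k1 k2) ^ (tperm i k1))%g.
    by rewrite tpermJ tpermR tpermD.
  rewrite /conjg tpermV.
  by apply: pinv_mul => //; apply: pinv_mul.
by move=> H; move: k2X; rewrite H.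
Qed.

Lemma swap_invol (Q : finType) (i j : Q) : involutive (swap_basis i j).
Proof. by move=> x; apply/ffunP => k; rewrite !ffunE tpermK. Qed.

Lemma swap_id (Q : finType) (i : Q) (x : basis Q) : swap_basis i i x = x.
Proof. by apply/ffunP => k; rewrite ffunE tperm1 perm1. Qed.

Lemma pinv_S (C : numClosedFieldType) (n : nat) (rho : oper C 'I_n) (S : {set 'I_n})
  (i j : 'I_n) :
  is_state rho -> symmetric_state (@ptrace C n S rho) -> i \in S -> j \in S ->
  pinvb rho (tperm i j).
Proof.
move=> [pr _] [_ sP] Hi Hj.
set P := @ptrace C n S rho.
have symP : forall a b, P (swap_basis (exist (fun x => x \in S) i Hi : sub_qubits S)
                         (exist _ j Hj) a) b = P a b.
  move=> a b; have := sP (delta C b) (exist _ i Hi) (exist _ j Hj) a.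
  by rewrite /apply_op /delta !sum_delta.
have D0 : \sum_y rho y y - \sum_y rho (swap_basis i j y) y = 0.
  rewrite -(trace_swap rho Hi Hj) (eq_bigr _ (fun a _ => symP a a)).
  have -> : \sum_y rho y y = \sum_y rho (swap_basis i i y) y.
    by apply: eq_bigr => y _; rewrite swap_id.
  rewrite -(trace_swap rho Hi Hi).
  by rewrite [X in X - _](eq_bigr (fun a => P a a)) ?subrr // => a _; rewrite swap_id.
have col := col_inv (swap_invol i j) pr D0.
apply/pinvP => x y.
rewrite -/(swap_basis i j x) pr.1 col -pr.1 //.
Qed.

Theorem mainTheorem12 (C : numClosedFieldType) (n : nat) (rho : oper C 'I_n)
    (SS : {set {set 'I_n}}) :
  is_state rho -> hconnected SS ->
  (forall S, S \in SS -> symmetric_state (@ptrace C n S rho)) ->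
  symmetric_state rho.
Proof.
move=> st hc HS; split => // w i j a.
have := all_tperm (fun S i j SS' Hi Hj => pinv_S st (HS S SS') Hi Hj) hc i j.
move/pinvP => H; rewrite /apply_op; apply: eq_bigr => b _.
by rewrite /swap_basis H.
Qed.
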